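(* For every very-WSTS $\mathcal{S}$, the system $\mathcal{S}_\bot$ is a very-WSTS. Moreover, if $\mathcal{S}$ is positive, then $\mathcal{S}_\bot$ is positive.
   Context: A (labeled, ordered) transition system is $\mathcal{S}=(X,\xrightarrow{\Sigma},\le)$: $X$ a set, $\Sigma$ a finite alphabet, $\xrightarrow{a}\subseteq X\times X$, $\le$ a quasi-ordering; relations extend to words. $\mathrm{Post}(x,w)=\{y:x\xrightarrow{w}y\}$, extended to sets by union; $\downarrow D=\{x:\exists y\in D,\,x\le y\}$. WSTS: $\le$ a wqo and $x\xrightarrow{a}y$, $x'\ge x$ imply $x'\xrightarrow{w}y'\ge y$ for some $w$. Strong monotonicity: $x\xrightarrow{a}y$, $x'\ge x$ imply $x'\xrightarrow{a}y'$ with $y'\ge y$; strong-strict: additionally $x'>x$ gives $y'>y$. Deterministic: at most one $a$-successor. Ideals: nonempty downward-closed directed subsets, set $\mathrm{Idl}(X)$. Completion $\widehat{\mathcal{S}}=(\mathrm{Idl}(X),\Rightarrow_\Sigma,\subseteq)$ with $I\xRightarrow{a}J$ iff $J$ is a $\subseteq$-maximal ideal included in $\downarrow\mathrm{Post}(I,a)$. Levels: $\mathrm{Idl}_0(X)=\mathrm{Idl}(X)$, $\mathrm{Idl}_n(X)$ = unions of strictly increasing sequences in $\mathrm{Idl}_{n-1}(X)$; finitely many levels if some $\mathrm{Idl}_n(X)=\emptyset$. Very-WSTS: WSTS with strong monotonicity whose completion is a deterministic WSTS ($\subseteq$ a wqo on ideals, monotone) with strong-strict monotonicity, and $\mathrm{Idl}(X)$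 has finitely many levels. Positivity: $w$ is positive for $x$ if $x\xrightarrow{w}z$ for some $z\ge x$; $w$ is positive if positive for every $x$ with $\mathrm{Post}(x,w)\ne\emptyset$; a system is positive if every word positive for some state is positive. $\mathcal{S}_\bot=(X\cup\{\bot\},\xrightarrow{\Sigma},\le_\bot)$, where $\bot\notin X$ is a new state with no transitions (transition relations unchanged) and $\le_\bot=\le\cup\{(\bot,y):y\in X\cup\{\bot\}\}$. *)

(* Defs.v *)
From Stdlib Require Import List.
Import ListNotations.
Set Implicit Arguments.

Record TS : Type := mkTS {
  st : Type;
  lab : Type;
  trans : lab -> st -> st -> Prop;   (* x -a-> y  is  trans a x y *)
  ord : st -> st -> Prop
}.

Section Defs.
Variable T0 : TS.
Notation X := (st T0).
Notation le := (ord T0).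

Definition finite_type (T : Type) : Prop := exists l : list T, forall a, In a l.

Definition quasi_order {T : Type} (R : T -> T -> Prop) : Prop :=
  (forall x, R x x) /\ (forall x y z, R x y -> R y z -> R x z).

Definition wqo {T : Type} (R : T -> T -> Prop) : Prop :=
  quasi_order R /\ forall f : nat -> T, exists i j, i < j /\ R (f i) (f j).

Definition is_TS : Prop := finite_type (lab T0) /\ quasi_order le.

Definition lt (x y : X) : Prop := le x y /\ ~ le y x.

Inductive steps : list (lab T0) -> X -> X -> Prop :=
| steps_nil : forall x, steps [] x x
| steps_cons : forall a w x y z, trans T0 a x y -> steps w y z -> steps (a :: w) x z.

Definition WSTS : Prop :=
  is_TS /\ wqo le /\
  forall a x y x', trans T0 a x y -> le x x' ->
    exists w y', steps w x' y' /\ le y y'.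

Definition strong_monotone : Prop :=
  forall a x y x', trans T0 a x y -> le x x' ->
    exists y', trans T0 a x' y' /\ le y y'.

Definition strong_strict_monotone : Prop :=
  forall a x y x', trans T0 a x y -> le x x' ->
    exists y', trans T0 a x' y' /\ le y y' /\ (lt x x' -> lt y y').

Definition deterministic : Prop :=
  forall a x y y', trans T0 a x y -> trans T0 a x y' -> y = y'.

Definition Post (D : X -> Prop) (a : lab T0) : X -> Prop :=
  fun y => exists x, D x /\ trans T0 a x y.

Definition down (D : X -> Prop) : X -> Prop := fun x => exists y, D y /\ le x y.

Definition incl (A B : X -> Prop) : Prop := forall x, A x -> B x.

Definition is_ideal (I : X -> Prop) : Prop :=
  (exists x, I x) /\
  (forall x y, le x y -> I y -> I x) /\
  (forall x y, I x -> I y -> exists z, I z /\ le x z /\ le y z).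

Definition Idl : Type := { I : X -> Prop | is_ideal I }.

Definition Itrans (a : lab T0) (I J : Idl) : Prop :=
  incl (proj1_sig J) (down (Post (proj1_sig I) a)) /\
  forall K : Idl, incl (proj1_sig J) (proj1_sig K) ->
    incl (proj1_sig K) (down (Post (proj1_sig I) a)) ->
    incl (proj1_sig K) (proj1_sig J).

Definition Iincl (I J : Idl) : Prop := incl (proj1_sig I) (proj1_sig J).

Fixpoint level (n : nat) : (X -> Prop) -> Prop :=
  match n with
  | O => is_ideal
  | S m => fun I => exists f : nat -> (X -> Prop),
      (forall k, level m (f k)) /\
      (forall k, incl (f k) (f (Datatypes.S k)) /\ ~ incl (f (Datatypes.S k)) (f k)) /\
      (forall x, I x <-> exists k, f k x)
  end.

Definition finitely_many_levels : Prop :=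
  exists n, forall I, ~ level n I.

Definition positive_for (w : list (lab T0)) (x : X) : Prop :=
  exists z, steps w x z /\ le x z.

Definition positive_word (w : list (lab T0)) : Prop :=
  forall x, (exists y, steps w x y) -> positive_for w x.

Definition positive : Prop :=
  forall w, (exists x, positive_for w x) -> positive_word w.

End Defs.

Definition completion (S : TS) : TS :=
  @mkTS (Idl S) (lab S) (@Itrans S) (@Iincl S).

Definition very_WSTS (S : TS) : Prop :=
  WSTS S /\ strong_monotone S /\
  deterministic (completion S) /\ WSTS (completion S) /\
  strong_strict_monotone (completion S) /\
  finitely_many_levels S.

(** S_bot: new state bot (= None) with no transitions, below everything *)
Definition trans_bot (S : TS) (a : lab S) (x y : option (st S)) : Prop :=
  match x, y with
  | Some x, Some y => trans S a x y
  | _, _ => False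
  end.

Definition ord_bot (S : TS) (x y : option (st S)) : Prop :=
  match x, y with
  | None, _ => True
  | Some _, None => False
  | Some x, Some y => ord S x y
  end.

Definition S_bot (S : TS) : TS :=
  @mkTS (option (st S)) (lab S) (@trans_bot S) (@ord_bot S).

(* Main.v *)
Require Import Defs.
From Stdlib Require Import List Classical FunctionalExtensionality PropExtensionality ProofIrrelevance.
Import ListNotations.
Set Implicit Arguments.

Definition restr (S : TS) (P : option (st S) -> Prop) : st S -> Prop := fun x => P (Some x).
Definition liftp (S : TS) (K : st S -> Prop) : option (st S) -> Prop :=
  fun o => match o with None => True | Some x => K x end.

Lemma ord_bot_refl (S : TS) : quasi_order (ord S) -> forall x, ord_bot S x x.
Proof. intros Hq [x|]; simpl; auto. apply Hq. Qed.

Lemma ord_bot_trans (S : TS) : quasi_order (ord S) -> forall x y z,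
  ord_bot S x y -> ord_bot S y z -> ord_bot S x z.
Proof.
  intros Hq [x|] [y|] [z|]; simpl; intros; auto; try contradiction.
  eapply (proj2 Hq); eauto.
Qed.

Lemma ideal_None (S : TS) (P : st (S_bot S) -> Prop) : is_ideal (S_bot S) P -> P None.
Proof. intros [[x Hx] [Hd _]]. apply (Hd None x); simpl; auto. Qed.

Lemma restr_ideal (S : TS) (P : st (S_bot S) -> Prop) :
  is_ideal (S_bot S) P -> (exists x, P (Some x)) -> is_ideal S (restr S P).
Proof.
  intros [_ [Hd Hdir]] Hne. split; [exact Hne|split].
  - intros x y Hxy Hy. exact (Hd (Some x) (Some y) Hxy Hy).
  - intros x y Hx Hy. destruct (Hdir _ _ Hx Hy) as [[z|] [Hz [H1 H2]]].
    + exists z; auto.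
    + simpl in H1; contradiction.
Qed.

Lemma lift_ideal (S : TS) (Hq : quasi_order (ord S)) (K : st S -> Prop) :
  is_ideal S K -> is_ideal (S_bot S) (liftp S K).
Proof.
  intros [[x Hx] [Hd Hdir]]. split; [exists (Some x); exact Hx|split].
  - intros [x'|] [y'|] Hxy Hy; simpl in *; auto; try contradiction. eauto.
  - intros [x'|] [y'|] Hx' Hy'; simpl in *.
    + destruct (Hdir _ _ Hx' Hy') as [z [? [? ?]]]. exists (Some z); simpl; auto.
    + exists (Some x'); simpl; repeat split; auto. apply Hq.
    + exists (Some y'); simpl; repeat split; auto. apply Hq.
    + exists None; simpl; auto.
Qed.

Definition liftI (S : TS) (Hq : quasi_order (ord S)) (K : Idl S) : Idl (S_bot S) :=
  exist _ (liftp S (proj1_sig K)) (lift_ideal Hq (proj2_sig K)).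

Lemma steps_bot_some (S : TS) w x y : steps S w x y -> steps (S_bot S) w (Some x) (Some y).
Proof.
  induction 1. apply (steps_nil (S_bot S)). eapply (@steps_cons (S_bot S)); [|eauto]. exact H.
Qed.

Lemma steps_bot_inv (S : TS) w x y : steps (S_bot S) w x y ->
  (w = [] /\ x = y) \/ exists x' y', x = Some x' /\ y = Some y' /\ steps S w x' y'.
Proof.
  induction 1 as [x|a w x y z Ht Hs IH]. left; auto.
  right. destruct x as [x|]; [|simpl in Ht; contradiction].
  destruct y as [y|]; [|simpl in Ht; contradiction].
  destruct IH as [[-> <-]|[y' [z' [Hy [Hz Hst]]]]].
  - exists x, y. repeat split; auto. eapply (@steps_cons S); [exact Ht|apply (steps_nil S)].
  - injection Hy; intros <-. exists x, z'. repeat split; auto. eapply (@steps_cons S); [exact Ht|exact Hst].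
Qed.

Lemma Idl_eq (S : TS) (P Q : Idl S) : (forall x, proj1_sig P x <-> proj1_sig Q x) -> P = Q.
Proof.
  destruct P as [P HP], Q as [Q HQ]; simpl; intro H.
  assert (P = Q) by (apply functional_extensionality; intro; apply propositional_extensionality; auto).
  subst. f_equal; apply proof_irrelevance.
Qed.

Lemma Itrans_bot_ne (S : TS) (a : lab S) (P J : Idl (S_bot S)) : quasi_order (ord S) ->
  @Itrans (S_bot S) a P J -> (exists x, proj1_sig P (Some x)) /\ (exists x, proj1_sig J (Some x)).
Proof.
  intros Hq [Hinc Hmax]. destruct P as [P HP], J as [J HJ]; simpl in *.
  destruct (proj1 HJ) as [j Hj]. destruct (Hinc j Hj) as [y [[x [Hx Ht]] Hle]].
  destruct x as [x|]; [|simpl in Ht; contradiction].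
  destruct y as [y|]; [|simpl in Ht; contradiction].
  split. exists x; exact Hx.
  apply NNPP; intro Hn.
  set (Kp := fun o => ord_bot S o (Some y)).
  assert (HK : is_ideal (S_bot S) Kp).
  { split; [exists None; unfold Kp; simpl; auto|split].
    - intros x0 y0 H1 H2. unfold Kp in *. eapply ord_bot_trans; [exact Hq|exact H1|exact H2].
    - intros x0 y0 H1 H2. exists (Some y). unfold Kp. split; [apply ord_bot_refl; auto|auto]. }
  specialize (Hmax (exist _ Kp HK)). simpl in Hmax.
  assert (Hsub : Defs.incl (S_bot S) J Kp).
  { intros [o|] Ho. exfalso; apply Hn; eauto. unfold Kp; simpl; trivial. }
  assert (Hsub2 : Defs.incl (S_bot S) Kp (down (S_bot S) (Post (S_bot S) P a))).
  { intros o Ho. exists (Some y). split. exists (Some x); split; auto. exact Ho. }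
  apply Hn. exists y. apply Hmax; auto. unfold Kp; simpl; apply Hq.
Qed.

Lemma Itrans_restr (S : TS) (a : lab S) (P J : Idl (S_bot S)) (Hq : quasi_order (ord S))
  (HP : is_ideal S (restr S (proj1_sig P))) (HJ : is_ideal S (restr S (proj1_sig J))) :
  @Itrans (S_bot S) a P J -> Itrans a (exist _ _ HP : Idl S) (exist _ _ HJ : Idl S).
Proof.
  destruct P as [P HP0], J as [J HJ0]. intros [Hinc Hmax]. simpl in *. split.
  - intros x Hx. destruct (Hinc (Some x) Hx) as [y0 [[x0 [Hx0 Ht]] Hle]].
    destruct y0 as [y|]; [|simpl in Ht; contradiction].
    destruct x0 as [x0|]; [|simpl in Ht; contradiction].
    exists y; split; [exists x0; split; auto|auto].
  - intros K HK1 HK2. simpl in *. intros x Hx.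
    assert (Hpost : forall k, proj1_sig K k -> exists y, Post (S_bot S) P a (Some y) /\ ord S k y).
    { intros k Hk. destruct (HK2 k Hk) as [y [[x0 [Hx0 Ht]] Hle]].
      exists y. split; auto. exists (Some x0). split; auto. }
    refine (Hmax (liftI Hq K) _ _ (Some x) Hx).
    + intros [o|] Ho; simpl; auto.
    + intros [k|] Hk; simpl in Hk.
      * destruct (Hpost k Hk) as [y [Hy Hle]]. exists (Some y); split; auto.
      * destruct (proj1 (proj2_sig K)) as [k Hk']. destruct (Hpost k Hk') as [y [Hy Hle]].
        exists (Some y); split; simpl; auto.
Qed.

Lemma Itrans_lift (S : TS) (a : lab S) (P : Idl (S_bot S)) (Hq : quasi_order (ord S))
  (HP : is_ideal S (restr S (proj1_sig P))) (K : Idl S) :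
  Itrans a (exist _ _ HP : Idl S) K -> @Itrans (S_bot S) a P (liftI Hq K).
Proof.
  destruct K as [K HK]; intros [Hinc Hmax]; simpl in *. split.
  - intros [k|] Hk; simpl in Hk.
    + destruct (Hinc k Hk) as [y [[x0 [Hx0 Ht]] Hle]]. exists (Some y). split.
      exists (Some x0). split; auto. simpl; auto.
    + destruct (proj1 HK) as [k Hk'].
      destruct (Hinc k Hk') as [y [[x0 [Hx0 Ht]] Hle]]. exists (Some y). split.
      exists (Some x0). split; auto. simpl; auto.
  - intros K' H1 H2 [x|] Hx; simpl; [|trivial].
    destruct K' as [K' HK']. simpl in *.
    assert (HR : is_ideal S (restr S K')).
    { apply restr_ideal; auto. destruct (proj1 HK) as [k Hk]; exists k; apply (H1 (Some k)); simpl; auto. }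
    apply (Hmax (exist _ _ HR)); simpl.
    + intros y Hy. apply (H1 (Some y)). simpl; auto.
    + intros y Hy. destruct (H2 (Some y) Hy) as [z0 [[x0 [Hx0 Ht]] Hle]].
      destruct z0 as [z|]; [|simpl in Ht; contradiction].
      destruct x0 as [x0|]; [|simpl in Ht; contradiction].
      exists z; split; [exists x0; split; auto|auto].
    + exact Hx.
Qed.

Lemma level_bot (S : TS) m (P : st (S_bot S) -> Prop) : level (S_bot S) m P ->
  P None /\ ((exists x, P (Some x)) -> level S m (restr S P)).
Proof.
  revert P; induction m as [|m IHm]; intros P H.
  - simpl in H. split. apply ideal_None; auto. intros; apply restr_ideal; auto.
  - simpl in H. destruct H as [f [Hl [Hs Hu]]].
    assert (HN : forall k, f k None) by (intro k; apply (IHm _ (Hl k))).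
    split. apply Hu. exists 0; auto.
    intros _. simpl. exists (fun k => restr S (f (Datatypes.S k))). split; [|split].
    + intro k. apply (IHm _ (Hl (Datatypes.S k))). destruct (Hs k) as [_ Hn].
      apply NNPP; intro Hc. apply Hn. intros [x|] Hx; [exfalso; apply Hc; exists x; exact Hx | apply HN].
    + intro k. destruct (Hs (Datatypes.S k)) as [H1 H2]. split.
      * intros x Hx; apply H1; exact Hx.
      * intro Hc; apply H2. intros [x|] Hx; [apply Hc; exact Hx| apply HN].
    + intro x. unfold restr. rewrite Hu. split.
      * intros [k Hk]. exists k. apply (proj1 (Hs k)); exact Hk.
      * intros [k Hk]; exists (Datatypes.S k); exact Hk.
Qed.

Theorem proposition27 (S : TS) :
  very_WSTS S ->
  very_WSTS (S_bot S) /\ (positive S -> positive (S_bot S)).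
Proof.
  intros [[[Hfin Hq] [[_ Hwqo] Hmon]] [Hsm [Hdet [[[_ _] [[_ Hwqo2] _]] [Hssm [n Hn]]]]]].
  assert (Hqb : quasi_order (ord (S_bot S))).
  { split. apply ord_bot_refl; auto. apply ord_bot_trans; auto. }
  assert (HqI : quasi_order (ord (completion (S_bot S)))).
  { split. intros x y Hy; exact Hy. intros x y z H1 H2 w Hw; apply H2, H1, Hw. }
  assert (Hssm_b : strong_strict_monotone (completion (S_bot S))).
  { intros a P J P' Ht Hle. simpl in Ht.
    destruct (Itrans_bot_ne Hq Ht) as [HPn HJn].
    pose proof (restr_ideal (proj2_sig P) HPn) as HP.
    pose proof (restr_ideal (proj2_sig J) HJn) as HJ.
    assert (HPn' : exists x, proj1_sig P' (Some x)).
    { destruct HPn as [x Hx]; exists x; apply Hle; exact Hx. }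
    pose proof (restr_ideal (proj2_sig P') HPn') as HP'.
    pose proof (Itrans_restr Hq HP HJ Ht) as HtS.
    assert (HleS : ord (completion S) (exist _ _ HP) (exist _ _ HP')).
    { intros x Hx; apply Hle; exact Hx. }
    destruct (Hssm a _ _ _ HtS HleS) as [K [HtK [HleK Hlt]]].
    exists (liftI Hq K). split; [|split].
    - apply Itrans_lift with (HP := HP'). exact HtK.
    - intros [x|] Hx; simpl; try (apply HleK; exact Hx); auto.
    - intros [_ Hnot]. destruct Hlt as [_ Hnot2].
      + split. intros x Hx; apply Hle; exact Hx.
        intro Hc; apply Hnot. intros [x|] Hx. apply Hc; exact Hx. apply ideal_None, proj2_sig.
      + split.
        * intros [x|] Hx; simpl; try (apply HleK; exact Hx); auto.
        * intro Hc; apply Hnot2. intros x Hx. apply (Hc (Some x)); exact Hx. }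
  split.
  - split; [|split; [|split; [|split; [|split]]]].
    +
      split; [split; [exact Hfin|exact Hqb]|split; [split; [exact Hqb|]|]].
      * intro f. destruct (classic (exists i, f i = None)) as [[i Hi]|Hall].
        -- exists i, (Datatypes.S i). split; auto. rewrite Hi. simpl; auto.
        -- assert (Hs : forall i, exists x, f i = Some x).
           { intro i. destruct (f i) as [x|] eqn:E; eauto. exfalso; apply Hall; eauto. }
           destruct (Hs 0) as [d _].
           destruct (Hwqo (fun i => match f i with Some x => x | None => d end)) as [i [j [Hij Hle]]].
           exists i, j. split; auto. destruct (Hs i) as [xi Ei]; destruct (Hs j) as [xj Ej].
           rewrite Ei, Ej in *. exact Hle.
      * intros a x y x' Ht Hle.
        destruct x as [x|]; [|simpl in Ht; contradiction].
        destruct y as [y|]; [|simpl in Ht; contradiction].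
        destruct x' as [x'|]; [|simpl in Hle; contradiction].
        destruct (Hmon a x y x' Ht Hle) as [w [y' [Hst Hle']]].
        exists w, (Some y'). split; auto. apply steps_bot_some; auto.
    + intros a x y x' Ht Hle.
      destruct x as [x|]; [|simpl in Ht; contradiction].
      destruct y as [y|]; [|simpl in Ht; contradiction].
      destruct x' as [x'|]; [|simpl in Hle; contradiction].
      destruct (Hsm a x y x' Ht Hle) as [y' [Ht' Hle']].
      exists (Some y'). split; auto.
    +
      intros a P J J' Ht Ht'. simpl in Ht, Ht'.
      destruct (Itrans_bot_ne Hq Ht) as [HPn HJn].
      destruct (Itrans_bot_ne Hq Ht') as [_ HJn'].
      pose proof (restr_ideal (proj2_sig P) HPn) as HP.
      pose proof (restr_ideal (proj2_sig J) HJn) as HJ.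
      pose proof (restr_ideal (proj2_sig J') HJn') as HJ'.
      pose proof (Hdet a _ _ _ (Itrans_restr Hq HP HJ Ht) (Itrans_restr Hq HP HJ' Ht')) as E.
      apply (f_equal (@proj1_sig _ _)) in E. simpl in E.
      apply Idl_eq. intros [x|].
      * apply (f_equal (fun g => g x)) in E. exact (conj (fun H => eq_rect _ (fun Q : Prop => Q) H _ E) (fun H => eq_rect _ (fun Q : Prop => Q) H _ (eq_sym E))).
      * split; intros _; apply ideal_None, proj2_sig.
    +
      split; [split; [exact Hfin|exact HqI]|split; [split; [exact HqI|]|]].
      * intro f. destruct (classic (exists i, ~ exists x, proj1_sig (f i) (Some x))) as [[i Hi]|Hall].
        -- exists i, (Datatypes.S i). split; auto. intros [x|] Hx.
           exfalso; apply Hi; eauto. apply ideal_None, proj2_sig.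
        -- assert (Hne : forall i, exists x, proj1_sig (f i) (Some x))
             by (intro i; apply NNPP; intro; apply Hall; eauto).
           pose (g := fun i => exist _ (restr S (proj1_sig (f i))) (restr_ideal (proj2_sig (f i)) (Hne i)) : Idl S).
           destruct (Hwqo2 g) as [i [j [Hij Hle]]]. exists i, j. split; auto.
           intros [x|] Hx. apply (Hle x Hx). apply ideal_None, proj2_sig.
      * intros a x y x' Ht Hle. destruct (Hssm_b a x y x' Ht Hle) as [y' [Ht' [Hle' _]]].
        exists [a], y'. split; auto. eapply (@steps_cons (completion (S_bot S))); [exact Ht'|apply (steps_nil (completion (S_bot S)))].
    + exact Hssm_b.
    + exists (Datatypes.S n). intros P HP.
      simpl in HP. destruct HP as [f [Hl [Hs _]]].
      destruct (@level_bot S n (f 0) (Hl 0)) as [HN0 _].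
      destruct (@level_bot S n (f 1) (Hl 1)) as [_ H1].
      apply (Hn (restr S (f 1))). apply H1.
      destruct (Hs 0) as [_ Hnot]. apply NNPP; intro Hc. apply Hnot.
      intros [x|] Hx. exfalso; apply Hc; eauto. exact HN0.
  - intros Hpos w [x0 [z0 [Hst0 Hle0]]] x [y Hst].
    destruct (steps_bot_inv Hst) as [[-> <-]|[x' [y' [-> [-> Hst']]]]].
    + exists x. split. constructor. apply ord_bot_refl; auto.
    + destruct (steps_bot_inv Hst0) as [[-> <-]|[x0' [z0' [-> [-> Hst0']]]]].
      * exists (Some x'). split. constructor. apply ord_bot_refl; auto.
      * destruct (Hpos w (ex_intro _ x0' (ex_intro _ z0' (conj Hst0' Hle0))) x' (ex_intro _ y' Hst')) as [z [Hz Hlz]].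
        exists (Some z). split. apply steps_bot_some; auto. exact Hlz.
Qed.
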